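(* Let $1\le p<\infty$, let $f$ be a function on $[0,1]$, let $0=x_0<x_1<\dots<x_M=1$, and let $g_M$ be the piecewise linear function interpolating $f$ at the points $(x_i,f(x_i))$, $0\le i\le M$. Then $\mathrm{Var}_p(g_M)\le\upsilon_p(M,f)$.
   Context: For $h$ on $[0,1]$ and $I$ an interval, $h(I)=h(\sup I)-h(\inf I)$. $\upsilon_p(n,f)=\sup(\sum_{j=1}^n|f(I_j)|^p)^{1/p}$ over collections of $n$ nonoverlapping subintervals of $[0,1]$. $\mathrm{Var}_p(g)=\sup(\sum_j|g(I_j)|^p)^{1/p}$ over all finite collections of nonoverlapping subintervals of $[0,1]$. *)

(* Defs.v *)
From HB Require Import structures.
From mathcomp Require Import all_boot all_order all_algebra.
From mathcomp Require Import all_classical all_reals all_analysis.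
Set Implicit Arguments. Unset Strict Implicit. Unset Printing Implicit Defensive.
Import Order.TTheory GRing.Theory Num.Theory.
Local Open Scope classical_set_scope.
Local Open Scope ring_scope.

(* A collection of n subintervals I_j of [0,1], j < n, given by their
   endpoints a j = inf I_j <= b j = sup I_j; nonoverlapping = pairwise
   disjoint interiors. *)
Definition nonoverlap {R : realType} (n : nat) (a b : nat -> R) : Prop :=
  (forall j, (j < n)%N -> 0 <= a j /\ a j <= b j /\ b j <= 1) /\
  (forall j k, (j < n)%N -> (k < n)%N -> j <> k -> b j <= a k \/ b k <= a j).

Definition pvar_sum {R : realType} (p : R) (h : R -> R) (n : nat)
  (a b : nat -> R) : R :=
  (\sum_(j < n) `|h (b j) - h (a j)| `^ p) `^ p^-1.

Definition upsilon {R : realType} (p : R) (n : nat) (f : R -> R) : \bar R :=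
  ereal_sup [set y : \bar R | exists a b : nat -> R,
                nonoverlap n a b /\ y = (pvar_sum p f n a b)%:E].

Definition Varp {R : realType} (p : R) (g : R -> R) : \bar R :=
  ereal_sup [set y : \bar R | exists (n : nat) (a b : nat -> R),
                nonoverlap n a b /\ y = (pvar_sum p g n a b)%:E].

(* Main.v *)
Require Import Defs.
From HB Require Import structures.
From mathcomp Require Import all_boot all_order all_algebra.
From mathcomp Require Import all_classical all_reals all_analysis.
From mathcomp Require Import ring lra.
Import Order.TTheory GRing.Theory Num.Theory.
Local Open Scope ring_scope.

Lemma jensen2 (R : realType) (p t a b : R) : 1 <= p -> 0 <= t -> t <= 1 ->
  `|t * a + (1 - t) * b| `^ p <= t * `|a| `^ p + (1 - t) * `|b| `^ p.
Proof.
move=> p1 t0 t1.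
rewrite (@le_trans _ _ ((t * `|a| + (1 - t) * `|b|) `^ p))//.
  rewrite ge0_ler_powR ?nnegrE ?(le_trans _ p1)// ?addr_ge0 ?mulr_ge0 ?subr_ge0//.
  by rewrite (le_trans (ler_normD _ _))// 2!normrM (ger0_norm t0) (ger0_norm (_ : 0 <= 1 - t)) ?subr_ge0.
have := (convex_powR p1 (Itv01 t0 t1)).
move=> H; have := H `|a| `|b|.
rewrite !inE /= !in_itv /= !normr_ge0 => /(_ isT isT).
by rewrite /conv /=.
Qed.

Lemma affine_comb (R : realType) (A c u xi s1 s2 D : R) : s2 - s1 != 0 -> D != 0 ->
 (s2/(s2-s1))*(A + c*(u+s1-xi)/D) + (1-s2/(s2-s1))*(A + c*(u+s2-xi)/D) = A + c*(u-xi)/D.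
Proof. move=> h1 h2. field. by rewrite h1 h2. Qed.

Definition endpt {R : realType} n (a b : nat -> R) (u : R) : Prop :=
  exists j, (j < n)%N /\ (u = a j \/ u = b j).

Lemma endpt_a {R : realType} {n} {a b : nat -> R} {j} : (j < n)%N -> endpt n a b (a j).
Proof. by move=> jn; exists j; split=> //; left. Qed.
Lemma endpt_b {R : realType} {n} {a b : nat -> R} {j} : (j < n)%N -> endpt n a b (b j).
Proof. by move=> jn; exists j; split=> //; right. Qed.

Lemma endpt01 {R : realType} {n} {a b : nat -> R} {u} :
  nonoverlap n a b -> endpt n a b u -> 0 <= u /\ u <= 1.
Proof.
move=> [H1 _] [j [jn [->|->]]]; have [h0 [h1 h2]] := H1 j jn; split=> //.
- exact: le_trans h1 h2.
- exact: le_trans h0 h1.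
Qed.

Lemma nonoverlap_map (R : realType) n (a b : nat -> R) (phi : R -> R) :
  nonoverlap n a b ->
  (forall u w, endpt n a b u -> endpt n a b w -> u <= w -> phi u <= phi w) ->
  (forall u, endpt n a b u -> 0 <= phi u /\ phi u <= 1) ->
  nonoverlap n (phi \o a) (phi \o b).
Proof.
move=> [H1 H2] mono rng; split.
- move=> j jn /=. have [h0 [h1 h2]] := H1 j jn.
  have [-> _] := rng (a j) (endpt_a jn).
  have [_ ->] := rng (b j) (endpt_b jn).
  by split=>//; split=>//; apply: mono => //; [apply: endpt_a|apply: endpt_b].
- move=> j k jn kn jk /=. case: (H2 j k jn kn jk) => h; [left|right];
  apply: mono => //; (apply: endpt_a || apply: endpt_b); done.
Qed.

Lemma xle {R : realType} {M : nat} {x : nat -> R} :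
  (forall i, (i < M)%N -> x i < x i.+1) ->
  forall i k, (i <= k)%N -> (k <= M)%N -> x i <= x k.
Proof.
move=> xi i k; elim: k => [|k IH] ik kM.
  by rewrite leqn0 in ik; rewrite (eqP ik).
move: ik; rewrite leq_eqVlt => /orP[/eqP->//|ik].
exact: le_trans (IH ik (ltnW kM)) (ltW (xi k kM)).
Qed.

Lemma xlt {R : realType} {M : nat} {x : nat -> R} :
  (forall i, (i < M)%N -> x i < x i.+1) ->
  forall i k, (i < k)%N -> (k <= M)%N -> x i < x k.
Proof.
move=> xi i k ik kM.
exact: lt_le_trans (xi i (leq_trans ik kM)) (xle xi _ _ ik kM).
Qed.

Lemma nonode_piece {R : realType} {M : nat} {x : nat -> R} :
  (forall i, (i < M)%N -> x i < x i.+1) ->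
  forall i k, (i < M)%N -> (k <= M)%N -> x i < x k -> x k < x i.+1 -> False.
Proof.
move=> xi i k iM kM h1 h2; case: (leqP k i) => ki.
  by have := xle xi _ _ ki (ltnW iM); rewrite leNgt h1.
by have := xle xi _ _ ki kM; rewrite leNgt h2.
Qed.

Lemma piece {R : realType} {M : nat} {x : nat -> R} :
  (forall i, (i < M)%N -> x i < x i.+1) -> x 0%N = 0 -> x M = 1 ->
  forall t, 0 <= t -> t <= 1 -> (forall k, (k <= M)%N -> t != x k) ->
  exists i, (i < M)%N /\ x i < t /\ t < x i.+1.
Proof.
move=> xi x0 xM t t0 t1 nn.
case: (boolP [exists i : 'I_M, (x i < t) && (t < x i.+1)]).
  by move/existsP=> [i /andP[h1 h2]]; exists i.
rewrite negb_exists => /forallP H.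
have : forall k, (k <= M)%N -> x k < t.
  elim=> [_|k IH kM].
    have := nn 0%N (leq0n M); rewrite x0 => h.
    by rewrite lt_neqAle eq_sym h t0.
  have h := IH (ltnW kM). have := H (Ordinal kM). rewrite /= h /= -leNgt => h2.
  by rewrite lt_neqAle h2 andbT eq_sym nn.
move/(_ M (leqnn M)). by rewrite xM ltNge t1.
Qed.

Lemma exmin (R : realType) (F : nat -> R) (P : nat -> bool) n :
  (exists j, (j < n)%N /\ P j) ->
  exists j0, [/\ (j0 < n)%N, P j0 & forall j, (j < n)%N -> P j -> F j0 <= F j].
Proof.
elim: n => [[j [] //]|n IH [j [jn Pj]]].
case: (boolP [exists j : 'I_n, P j]) => [/existsP [k Pk]|].
  have [j0 [j0n Pj0 Hj0]] := IH (ex_intro _ (val k) (conj (ltn_ord k) Pk)).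
  case: (boolP (P n)) => Pn.
    case: (leP (F j0) (F n)) => h.
      exists j0; split => //; first by rewrite ltnS ltnW.
      move=> j'; rewrite ltnS leq_eqVlt => /orP[/eqP->//|]. exact: Hj0.
    exists n; split=>//.
    move=> j'; rewrite ltnS leq_eqVlt => /orP[/eqP->//|jn' Pj'].
    exact: le_trans (ltW h) (Hj0 j' jn' Pj').
  exists j0; split => //; first by rewrite ltnS ltnW.
  move=> j'; rewrite ltnS leq_eqVlt => /orP[/eqP->|]; [by rewrite (negbTE Pn)|exact: Hj0].
rewrite negb_exists => /forallP H.
have Hn : forall j', (j' < n.+1)%N -> P j' -> j' = n.
  move=> j'; rewrite ltnS leq_eqVlt => /orP[/eqP->//|jn' Pj'].
  by have := H (Ordinal jn'); rewrite /= Pj'.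
exists n; split => //; first by rewrite -(Hn j jn Pj).
by move=> j' jn' Pj'; rewrite (Hn j' jn' Pj').
Qed.

Lemma exmax (R : realType) (F : nat -> R) (P : nat -> bool) n :
  (exists j, (j < n)%N /\ P j) ->
  exists j0, [/\ (j0 < n)%N, P j0 & forall j, (j < n)%N -> P j -> F j <= F j0].
Proof.
move=> h; have [j0 [h1 h2 h3]] := @exmin R (fun j => - F j) P n h.
by exists j0; split => // j jn Pj; rewrite -lerN2; apply: h3.
Qed.

Definition inpc {R : realType} (x : nat -> R) i (u : R) : bool := (x i < u) && (u < x i.+1).
Definition psi {R : realType} (x : nat -> R) i (s u : R) : R := if inpc x i u then u + s else u.
Definition isnode {R : realType} (M : nat) (x : nat -> R) (t : R) : bool :=
  [exists k : 'I_M.+1, t == x k].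
Definition bad {R : realType} M (x : nat -> R) n (a b : nat -> R) : nat :=
  (\sum_(j < n) (~~ isnode M x (a j) + ~~ isnode M x (b j)))%N.
Definition Tsum {R : realType} (p : R) (g : R -> R) n (a b : nat -> R) : R :=
  \sum_(j < n) `|g (b j) - g (a j)| `^ p.

Lemma node_x {R : realType} {M : nat} {x : nat -> R} {k} : (k <= M)%N -> isnode M x (x k).
Proof.
move=> kM; have kM' : (k < M.+1)%N by rewrite ltnS.
by apply/existsP; exists (Ordinal kM'); rewrite /= eqxx.
Qed.

Lemma isnodeP {R : realType} {M : nat} {x : nat -> R} {u} :
  isnode M x u -> exists k, (k <= M)%N /\ u = x k.
Proof. by move/existsP => [k /eqP ->]; exists k; split => //; rewrite -ltnS. Qed.

Lemma inpc_nonode {R : realType} {M : nat} {x : nat -> R} {i u} :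
  (forall i, (i < M)%N -> x i < x i.+1) -> (i < M)%N -> inpc x i u -> ~~ isnode M x u.
Proof.
move=> xi iM /andP[h1 h2]; apply/negP => /isnodeP [k [kM ek]].
rewrite ek in h1 h2; exact: (nonode_piece xi i k iM kM h1 h2).
Qed.

Lemma psi_nn {R : realType} {M : nat} {x : nat -> R} i s u :
  (forall i, (i < M)%N -> x i < x i.+1) -> (i < M)%N ->
  (~~ isnode M x (psi x i s u) <= ~~ isnode M x u)%N.
Proof.
move=> xi iM; rewrite /psi; case: ifP => h //.
by rewrite (inpc_nonode xi iM h) leq_b1.
Qed.

Lemma psi_aff {R : realType} (f g : R -> R) (M : nat) (x : nat -> R) i m Mx u :
  (i < M)%N ->
  (forall i t, (i < M)%N -> x i <= t -> t <= x i.+1 ->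
     g t = f (x i) + (f (x i.+1) - f (x i)) * (t - x i) / (x i.+1 - x i)) ->
  (inpc x i u -> m <= u /\ u <= Mx) -> x i < m -> Mx < x i.+1 ->
  g u = ((x i.+1 - Mx) / ((x i.+1 - Mx) - (x i - m))) * g (psi x i (x i - m) u)
        + (1 - (x i.+1 - Mx) / ((x i.+1 - Mx) - (x i - m))) * g (psi x i (x i.+1 - Mx) u).
Proof.
move=> iM gh bnd m0 M1; rewrite /psi; case: ifP => h; last by ring.
have [hm hM] := bnd h. move/andP: h => [h1 h2].
rewrite (gh i u iM (ltW h1) (ltW h2)).
rewrite (gh i (u + (x i - m)) iM); [|lra|lra].
rewrite (gh i (u + (x i.+1 - Mx)) iM); [|lra|lra].
rewrite affine_comb //.
  by rewrite gt_eqF //; lra.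
by rewrite gt_eqF //; lra.
Qed.

Lemma psi_nonoverlap {R : realType} (M : nat) (x : nat -> R) n (a b : nat -> R) i m Mx s :
  (i < M)%N -> (forall i, (i < M)%N -> x i < x i.+1) -> x 0%N = 0 -> x M = 1 ->
  nonoverlap n a b ->
  (forall u, endpt n a b u -> inpc x i u -> m <= u /\ u <= Mx) ->
  x i - m <= s -> s <= x i.+1 - Mx ->
  nonoverlap n (psi x i s \o a) (psi x i s \o b).
Proof.
move=> iM xi x0 xM NO bnd hs1 hs2.
have xi0 : 0 <= x i by rewrite -x0; apply: (xle xi) => //; apply: ltnW.
have xi1 : x i.+1 <= 1 by rewrite -xM; apply: (xle xi).
apply: nonoverlap_map => //.
- move=> u w Eu Ew uw; rewrite /psi.
  case: ifP => hu; case: ifP => hw.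
  + by rewrite lerD2r.
  + have [_ hM] := bnd u Eu hu. move/andP: hu => [hu1 hu2].
    move/negbT: hw; rewrite negb_and -!leNgt => /orP[hw|hw]; lra.
  + have [hm _] := bnd w Ew hw. move/andP: hw => [hw1 hw2].
    move/negbT: hu; rewrite negb_and -!leNgt => /orP[hu|hu]; lra.
  + done.
- move=> u Eu; have [u0 u1] := endpt01 NO Eu; rewrite /psi; case: ifP => hu //.
  have [hm hM] := bnd u Eu hu; move/andP: hu => [hu1 hu2]; split; lra.
Qed.

Lemma sum_strict n (F G : 'I_n -> nat) j0 : (forall j, F j <= G j)%N -> (F j0 < G j0)%N ->
  (\sum_(j < n) F j < \sum_(j < n) G j)%N.
Proof.
move=> h h0; rewrite (bigD1 j0) //= [X in (_ < X)%N](bigD1 j0) //=.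
by rewrite -addSn leq_add // leq_sum // => j _; exact: h.
Qed.

Lemma sum_pos n (F : 'I_n -> nat) : (0 < \sum_(j < n) F j)%N -> exists j, (0 < F j)%N.
Proof.
case: (boolP [exists j, (0 < F j)%N]) => [/existsP//|]; rewrite negb_exists => /forallP H.
by rewrite big1 // => j _; move: (H j); rewrite lt0n negbK => /eqP.
Qed.

Lemma step {R : realType} (p : R) (f g : R -> R) (M : nat) (x : nat -> R) n (a b : nat -> R) :
  1 <= p -> x 0%N = 0 -> x M = 1 ->
  (forall i, (i < M)%N -> x i < x i.+1) ->
  (forall i t, (i < M)%N -> x i <= t -> t <= x i.+1 ->
     g t = f (x i) + (f (x i.+1) - f (x i)) * (t - x i) / (x i.+1 - x i)) ->
  nonoverlap n a b -> (0 < bad M x n a b)%N ->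
  exists a' b', [/\ nonoverlap n a' b', (bad M x n a' b' < bad M x n a b)%N &
                   Tsum p g n a b <= Tsum p g n a' b'].
Proof.
move=> p1 x0 xM xi gh NO.
move/sum_pos => [j0 hj0].
have [t0 [Et0 nt0]] : exists t0, endpt n a b t0 /\ ~~ isnode M x t0.
  move: hj0; case: (boolP (isnode M x (a j0))) => ha /=.
    case: (boolP (isnode M x (b j0))) => hb //= _.
    by exists (b j0); split=> //; apply: endpt_b.
  by move=> _; exists (a j0); split => //; apply: endpt_a.
have [t00 t01] := endpt01 NO Et0.
have [i [iM [hi1 hi2]]] : exists i, (i < M)%N /\ x i < t0 /\ t0 < x i.+1.
  apply: (piece xi x0 xM t0 t00 t01) => k kM; apply/negP => /eqP ek.
  by move: nt0; rewrite ek (node_x kM).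
have t0In : inpc x i t0 by rewrite /inpc hi1 hi2.
pose P := fun j => inpc x i (a j) || inpc x i (b j).
have Pex : exists j, (j < n)%N /\ P j.
  have [j [jn hj]] := Et0; exists j; split => //; rewrite /P.
  by case: hj => <-; rewrite t0In ?orbT.
have [jm [jmn Pjm Hjm]] := @exmin R (fun j => if inpc x i (a j) then a j else b j) P n Pex.
have [jM [jMn PjM HjM]] := @exmax R (fun j => if inpc x i (b j) then b j else a j) P n Pex.
pose m := (if inpc x i (a jm) then a jm else b jm).
pose Mx := (if inpc x i (b jM) then b jM else a jM).
have abj : forall j, (j < n)%N -> a j <= b j.
  by move=> j jn; case: NO => H1 _; have [_ [h _]] := H1 j jn.
have Inm : inpc x i m.
  rewrite /m; case: ifP => h //; by move: Pjm; rewrite /P /= h.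
have InMx : inpc x i Mx.
  rewrite /Mx; case: ifP => h //; by move: PjM; rewrite /P /= h orbF.
have bnd : forall u, endpt n a b u -> inpc x i u -> m <= u /\ u <= Mx.
  move=> u [j [jn hu]] Iu.
  have Pj : P j by rewrite /P; case: hu => <-; rewrite Iu ?orbT.
  have h1 : m <= (if inpc x i (a j) then a j else b j) := Hjm j jn Pj.
  have h2 : (if inpc x i (b j) then b j else a j) <= Mx := HjM j jn Pj.
  have hab := abj j jn.
  case: hu => hu; subst u.
    rewrite Iu /= in h1; move: h2; case: ifP => _ h2; split; lra.
  rewrite Iu /= in h2; move: h1; case: ifP => _ h1; split; lra.
move: Inm InMx => /andP[m1 m2] /andP[M1 M2].
have mM : m <= Mx by have [] := bnd t0 Et0 t0In; lra.
pose s1 := x i - m; pose s2 := x i.+1 - Mx.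
pose th := s2 / (s2 - s1).
have th0 : 0 <= th by rewrite /th divr_ge0 // /s1 /s2; lra.
have th1 : th <= 1 by rewrite /th ler_pdivrMr /s1 /s2; lra.
pose T1 := Tsum p g n (psi x i s1 \o a) (psi x i s1 \o b).
pose T2 := Tsum p g n (psi x i s2 \o a) (psi x i s2 \o b).
have key : Tsum p g n a b <= th * T1 + (1 - th) * T2.
  rewrite /T1 /T2 /Tsum !mulr_sumr -big_split /=; apply: ler_sum => j _.
  have jn := ltn_ord j.
  have ea := @psi_aff R f g M x i m Mx _ iM gh (bnd _ (endpt_a jn)) m1 M2.
  have eb := @psi_aff R f g M x i m Mx _ iM gh (bnd _ (endpt_b jn)) m1 M2.
  have -> : g (b j) - g (a j) =
    th * (g (psi x i s1 (b j)) - g (psi x i s1 (a j))) +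
    (1 - th) * (g (psi x i s2 (b j)) - g (psi x i s2 (a j))).
    by rewrite {1}ea {1}eb /th /s1 /s2; ring.
  exact: jensen2.
have nnle : forall s j, (j < n)%N ->
  (~~ isnode M x (psi x i s (a j)) + ~~ isnode M x (psi x i s (b j))
     <= ~~ isnode M x (a j) + ~~ isnode M x (b j))%N.
  by move=> s j _; rewrite leq_add // psi_nn.
case: (leP T1 T2) => hT.
  exists (psi x i s2 \o a), (psi x i s2 \o b); split.
  - apply: (@psi_nonoverlap R M x n a b i m Mx s2 iM xi x0 xM NO bnd); rewrite /s2; lra.
  - rewrite /bad; apply: (@sum_strict n _ _ (Ordinal jMn)) => [j|] /=; first by apply: nnle.
    have hn : isnode M x (psi x i s2 Mx).
      rewrite /psi /inpc M1 M2 /s2 (_ : Mx + (x i.+1 - Mx) = x i.+1); last by ring.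
      exact: node_x.
    move: hn; rewrite /Mx; case: ifP => h hn.
      rewrite hn /= (inpc_nonode xi iM h) addn0 addn1 ltnS psi_nn //.
    have ha : inpc x i (a jM) by move: PjM; rewrite /P /= h orbF.
    by rewrite hn /= (inpc_nonode xi iM ha) add0n add1n ltnS psi_nn.
  - apply: (le_trans key); rewrite -/T2.
    have : th * T1 <= th * T2 by rewrite ler_wpM2l.
    lra.
exists (psi x i s1 \o a), (psi x i s1 \o b); split.
- apply: (@psi_nonoverlap R M x n a b i m Mx s1 iM xi x0 xM NO bnd); rewrite /s1; lra.
- rewrite /bad; apply: (@sum_strict n _ _ (Ordinal jmn)) => [j|] /=; first by apply: nnle.
  have hn : isnode M x (psi x i s1 m).
    rewrite /psi /inpc m1 m2 /s1 (_ : m + (x i - m) = x i); last by ring.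
    by apply: node_x; apply: ltnW.
  move: hn; rewrite /m; case: ifP => h hn.
    by rewrite hn /= (inpc_nonode xi iM h) add0n add1n ltnS psi_nn.
  have hb : inpc x i (b jm) by move: Pjm; rewrite /P /= h.
  by rewrite hn /= (inpc_nonode xi iM hb) addn0 addn1 ltnS psi_nn.
- apply: (le_trans key); rewrite -/T1.
  have : (1 - th) * T2 <= (1 - th) * T1 by rewrite ler_wpM2l ?subr_ge0 // ltW.
  lra.
Qed.

Lemma reduce {R : realType} (p : R) (f g : R -> R) (M : nat) (x : nat -> R) n :
  1 <= p -> x 0%N = 0 -> x M = 1 ->
  (forall i, (i < M)%N -> x i < x i.+1) ->
  (forall i t, (i < M)%N -> x i <= t -> t <= x i.+1 ->
     g t = f (x i) + (f (x i.+1) - f (x i)) * (t - x i) / (x i.+1 - x i)) ->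
  forall k (a b : nat -> R), nonoverlap n a b -> (bad M x n a b <= k)%N ->
  exists a' b', [/\ nonoverlap n a' b', bad M x n a' b' = 0%N &
                   Tsum p g n a b <= Tsum p g n a' b'].
Proof.
move=> p1 x0 xM xi gh; elim=> [|k IH] a b NO hb.
  by exists a, b; split => //; move: hb; rewrite leqn0 => /eqP.
case: (posnP (bad M x n a b)) => hb0; first by exists a, b; split.
have [a' [b' [NO' hlt hT]]] := @step R p f g M x n a b p1 x0 xM xi gh NO hb0.
have hb' : (bad M x n a' b' <= k)%N by rewrite -ltnS (leq_trans hlt hb).
have [a'' [b'' [NO'' h0 hT']]] := IH a' b' NO' hb'.
by exists a'', b''; split => //; exact: le_trans hT hT'.
Qed.

Lemma g_node {R : realType} (f g : R -> R) (M : nat) (x : nat -> R) u :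
  x 0%N = 0 -> x M = 1 -> (forall i, (i < M)%N -> x i < x i.+1) ->
  (forall i t, (i < M)%N -> x i <= t -> t <= x i.+1 ->
     g t = f (x i) + (f (x i.+1) - f (x i)) * (t - x i) / (x i.+1 - x i)) ->
  isnode M x u -> g u = f u.
Proof.
move=> x0 xM xi gh /isnodeP [k [kM ->]].
case: (ltnP k M) => kM'.
  rewrite (gh k (x k) kM' (lexx _) (ltW (xi k kM'))).
  by rewrite subrr mulr0 mul0r addr0.
have ek : k = M by apply/eqP; rewrite eqn_leq kM kM'.
rewrite ek; clear kM kM' ek.
case: M x0 xM xi gh => [|M] x0 xM xi gh.
  by move: xM; rewrite x0 => /eqP; rewrite eq_sym oner_eq0.
have h := xi M (ltnSn M).
rewrite (gh M (x M.+1) (ltnSn M) (ltW h) (lexx _)).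
rewrite mulfK; first by ring.
by rewrite subr_eq0 gt_eqF.
Qed.

Lemma bad0 {R : realType} {M : nat} {x : nat -> R} {n} {a b : nat -> R} :
  bad M x n a b = 0%N -> forall j, (j < n)%N -> isnode M x (a j) && isnode M x (b j).
Proof.
move=> h j jn; move: h; rewrite /bad (bigD1 (Ordinal jn)) //= => /eqP.
by rewrite !addn_eq0 !eqb0 !negbK => /andP[/andP[-> ->] _].
Qed.

Lemma xinj {R : realType} {M : nat} {x : nat -> R} :
  (forall i, (i < M)%N -> x i < x i.+1) ->
  forall i k, (i <= M)%N -> (k <= M)%N -> x i = x k -> i = k.
Proof.
move=> xi i k iM kM e; case: (ltngtP i k) => // h.
  by have := xlt xi _ _ h kM; rewrite e ltxx.
by have := xlt xi _ _ h iM; rewrite e ltxx.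
Qed.

Lemma node_case {R : realType} (p : R) (f : R -> R) (M : nat) (x : nat -> R) n (a b : nat -> R) :
  1 <= p -> x M = 1 -> (forall i, (i < M)%N -> x i < x i.+1) ->
  nonoverlap n a b -> (forall j, (j < n)%N -> isnode M x (a j) && isnode M x (b j)) ->
  (((Tsum p f n a b) `^ p^-1)%:E <= upsilon p M f)%E.
Proof.
move=> p1 xM xi NO Hn.
have p0 : p != 0 by rewrite gt_eqF // (lt_le_trans ltr01 p1).
pose pk := fun i : nat => [pick j : 'I_n | (a j == x i) && (a j < b j)].
pose a' := fun i => if pk i is Some j then a j else 0.
pose b' := fun i => if pk i is Some j then b j else 0.
have NO' : nonoverlap M a' b'.
  case: NO => H1 H2; split.
  - move=> i iM; rewrite /a' /b'; case: (pk i) => [j|]; first exact: H1.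
    split; lra.
  - move=> i k iM kM ik; rewrite /a' /b' /pk.
    case: pickP => [j /andP[/eqP hj _]|_]; case: pickP => [j' /andP[/eqP hj' _]|_].
    + apply: H2 => // jj.
      have : x i = x k by rewrite -hj -hj' jj.
      by move/(xinj xi i k (ltnW iM) (ltnW kM)).
    + by right; have := H1 j (ltn_ord j); lra.
    + by left; have := H1 j' (ltn_ord j'); lra.
    + by left; lra.
have le1 : Tsum p f n a b <= Tsum p f M a' b'.
  rewrite /Tsum.
  pose Q := fun (i : 'I_M) (j : 'I_n) => (a j == x i) && (a j < b j).
  apply: (@le_trans _ _ (\sum_(j < n) \sum_(i < M)
          (if Q i j then `|f (b j) - f (a j)| `^ p else 0))).
    apply: ler_sum => j _.
    have sge0 : forall (P : pred 'I_M), 0 <= \sum_(i < M | P i)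
          (if Q i j then `|f (b j) - f (a j)| `^ p else 0).
      by move=> P; apply: sumr_ge0 => i _; case: ifP => _ //; exact: powR_ge0.
    have [_ [hab hb1]] := (proj1 NO) j (ltn_ord j).
    case: (boolP (a j < b j)) => hab'.
      have /andP[ha _] := Hn j (ltn_ord j).
      have [k [kM ek]] := isnodeP ha.
      have kM' : (k < M)%N.
        rewrite ltn_neqAle kM andbT; apply/eqP => ekM.
        by move: hab' hb1; rewrite ek ekM xM; move=> h1 h2; lra.
      rewrite (bigD1 (Ordinal kM')) //=.
      rewrite /Q /= -ek eqxx hab' /= lerDl.
      by apply: sumr_ge0 => i _; case: ifP => _ //; exact: powR_ge0.
    have -> : b j = a j by move: hab'; rewrite ltNge negbK => h; apply/eqP; rewrite eq_le h hab.
    rewrite subrr normr0 powR0 //.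
    by apply: sumr_ge0 => i _; case: ifP => _ //; exact: powR_ge0.
  rewrite exchange_big /=; apply: ler_sum => i _.
  rewrite /a' /b' /pk /Q; case: pickP => [j0 hj0 | hnone].
    rewrite (bigD1 j0) //= hj0 big1 ?addr0 // => j hj.
    case: ifP => // /andP[/eqP e1 e2].
    move/andP: hj0 => [/eqP e3 e4].
    have jj : (j : nat) <> j0 by move=> h; move: hj; rewrite (val_inj h) eqxx.
    case: ((proj2 NO) j j0 (ltn_ord j) (ltn_ord j0) jj) => h; lra.
  rewrite big1; first exact: powR_ge0.
  by move=> j _; rewrite hnone.
apply: (@le_trans _ _ ((pvar_sum p f M a' b')%:E)).
  rewrite lee_fin /pvar_sum; apply: ge0_ler_powR => //.
  - by rewrite invr_ge0 (le_trans ler01 p1).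
  - by rewrite nnegrE /Tsum sumr_ge0 // => j _; exact: powR_ge0.
  - by rewrite nnegrE sumr_ge0 // => j _; exact: powR_ge0.
apply: ereal_sup_ubound; by exists a', b'; split.
Qed.

Theorem lemma4p1 (R : realType) (p : R) (f g : R -> R) (M : nat) (x : nat -> R) :
  1 <= p ->
  x 0%N = 0 -> x M = 1 ->
  (forall i, (i < M)%N -> x i < x i.+1) ->
  (forall i t, (i < M)%N -> x i <= t -> t <= x i.+1 ->
     g t = f (x i) + (f (x i.+1) - f (x i)) * (t - x i) / (x i.+1 - x i)) ->
  (Varp p g <= upsilon p M f)%E.
Proof.
move=> p1 x0 xM xi gh.
apply: ge_ereal_sup => y [n [a [b [NO ->]]]].
have [a' [b' [NO' h0 hT]]] := @reduce R p f g M x n p1 x0 xM xi gh (bad M x n a b) a b NO (leqnn _).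
apply: le_trans (@node_case R p f M x n a' b' p1 xM xi NO' (bad0 h0)).
have -> : Tsum p f n a' b' = Tsum p g n a' b'.
  rewrite /Tsum; apply: eq_bigr => j _.
  have /andP[ha hb] := bad0 h0 j (ltn_ord j).
  by rewrite (@g_node R f g M x _ x0 xM xi gh ha) (@g_node R f g M x _ x0 xM xi gh hb).
rewrite lee_fin /pvar_sum; apply: ge0_ler_powR => //.
- by rewrite invr_ge0 (le_trans ler01 p1).
- by rewrite nnegrE sumr_ge0 // => j _; exact: powR_ge0.
- by rewrite nnegrE /Tsum sumr_ge0 // => j _; exact: powR_ge0.
Qed.
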